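(* Let $T$ be a finite tree. Then its line graph $L(T)$ is co-chordal if and only if $T$ is one of the following: (i) a star graph; (ii) a broom of diameter $3$; (iii) a (partially) whiskered star; (iv) a path $P_n$ with $2\leq n\leq 5$.
   Context: The line graph $L(G)$ has vertex set $E(G)$, two vertices adjacent iff the corresponding edges share a vertex. A graph is chordal if it has no induced cycle of length $>3$; it is co-chordal if its complement is chordal. A star has vertices $u,v_1,\dots,v_n$ and edges $\{u,v_i\}$. $P_n$ has vertices $u_1,\dots,u_n$ and edges $\{u_i,u_{i+1}\}$. A broom is obtained from $P_n$ by attaching $m$ new vertices via pendant edges to its first (or last) vertex. A (partially) whiskered star is obtained from a star by attaching a new pendant edge (with a new vertex) to each vertex of the star (respectively to each vertex of some subset of its vertices). *)

(* Defs.v *)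
From mathcomp Require Import all_boot.
Set Implicit Arguments. Unset Strict Implicit. Unset Printing Implicit Defensive.

(* Simple graphs: a relation e on a finType V, assumed symmetric and irreflexive. *)

Definition is_connected (V : finType) (e : rel V) : Prop :=
  forall x y : V, connect e x y.
Definition is_acyclic (V : finType) (e : rel V) : Prop :=
  forall s : seq V, uniq s -> 3 <= size s -> ~~ cycle e s.
Definition is_tree (V : finType) (e : rel V) : Prop :=
  0 < #|V| /\ is_connected e /\ is_acyclic e.

Definition is_edge (V : finType) (e : rel V) (s : {set V}) : bool :=
  [exists x, exists y, e x y && (s == [set x; y])].
Notation line_vert e := {s : {set _} | is_edge e s}.
Definition line_adj (V : finType) (e : rel V) : rel (line_vert e) :=
  fun a b => (a != b) && (val a :&: val b != set0).

Definition compl_adj (W : finType) (g : rel W) : rel W :=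
  fun x y => (x != y) && ~~ g x y.

Definition has_induced_long_cycle (W : finType) (g : rel W) : Prop :=
  exists k : nat, 4 <= k /\ exists c : 'I_k -> W, injective c /\
    forall i j : 'I_k, g (c i) (c j) = ((i.+1 %% k == j) || (j.+1 %% k == i)).
Definition chordal (W : finType) (g : rel W) : Prop :=
  ~ has_induced_long_cycle g.
Definition cochordal (W : finType) (g : rel W) : Prop :=
  chordal (compl_adj g).

Definition isomorphic (V W : finType) (e : rel V) (f : rel W) : Prop :=
  exists g : V -> W, bijective g /\ forall x y, f (g x) (g y) = e x y.

Fixpoint walk (W : finType) (g : rel W) (k : nat) (x y : W) : bool :=
  match k with
  | 0 => x == y
  | k'.+1 => [exists z, g x z && walk g k' z y]
  end.
Definition diameter3 (W : finType) (g : rel W) : Prop :=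
  (forall x y : W, [exists j : 'I_4, walk g j x y]) /\
  (exists x y : W, ~~ [exists j : 'I_3, walk g j x y]).

Definition star_adj (n : nat) : rel 'I_n.+1 :=
  fun i j => ((i == 0 :> nat) && (j != 0 :> nat)) || ((j == 0 :> nat) && (i != 0 :> nat)).

Definition path_adj (n : nat) : rel 'I_n :=
  fun i j => (i.+1 == j :> nat) || (j.+1 == i :> nat).

Definition broom_adj (n m : nat) : rel 'I_(n + m) :=
  fun i j => [|| (i < n) && (j < n) && ((i.+1 == j :> nat) || (j.+1 == i :> nat)),
                (i == 0 :> nat) && (n <= j) | (j == 0 :> nat) && (n <= i)].

(* Partially whiskered star: star on 'I_n.+1 (inl), and for each vertex i in S a
   new pendant vertex (inr i) attached to i. *)
Definition wstar_pred (n : nat) (S : {set 'I_n.+1}) (x : 'I_n.+1 + 'I_n.+1) : bool :=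
  if x is inr i then i \in S else true.
Notation wstar_vert S := {x : _ + _ | wstar_pred S x}.
Definition wstar_adj (n : nat) (S : {set 'I_n.+1}) : rel (wstar_vert S) :=
  fun x y => match val x, val y with
             | inl i, inl j => star_adj i j
             | inl i, inr j => i == j
             | inr i, inl j => i == j
             | inr _, inr _ => false
             end.
Arguments line_adj {V} e.
Arguments wstar_adj {n} S.
Arguments star_adj n : clear implicits.
Arguments path_adj n : clear implicits.
Arguments broom_adj n m : clear implicits.

(* Main.v *)
Require Import Defs.
From mathcomp Require Import all_boot.
From mathcomp Require Import zify.
Set Implicit Arguments. Unset Strict Implicit. Unset Printing Implicit Defensive.

Definition twoP3 (V : finType) (e : rel V) : Prop :=
  exists a b c d f g : V, [/\ uniq [:: a; b; c; d; f; g], e a b, e b c, e d f & e f g].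

Section Gen.
Variables (V : finType) (e : rel V).
Hypotheses (e_sym : symmetric e) (e_irr : irreflexive e).

Lemma neq_of_e x y : e x y -> x != y.
Proof. by apply: contraTneq => ->; rewrite e_irr. Qed.

Lemma mk2P3 a b c d f g : e a b -> e b c -> a != c -> e d f -> e f g -> d != g ->
  a != d -> a != f -> a != g -> b != d -> b != f -> b != g -> c != d -> c != f -> c != g ->
  twoP3 e.
Proof.
move=> ab bc ac df fg dg ad af ag bd bf bg cd cf cg.
exists a, b, c, d, f, g; split=> //=.
rewrite !inE !negb_or ad af ag bd bf bg cd cf cg ac dg (neq_of_e ab) (neq_of_e bc)
  (neq_of_e df) (neq_of_e fg) /=.
by [].
Qed.

Lemma line_edge (A : line_vert e) : exists x y, e x y /\ val A = [set x; y].
Proof.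
case: A => /= s /existsP [x /existsP [y /andP [exy /eqP ->]]].
by exists x, y.
Qed.

Lemma line_edge_adj (A : line_vert e) x y : x \in val A -> y \in val A -> x != y -> e x y.
Proof.
have [a [b [eab ->]]] := line_edge A.
rewrite !inE => /orP [] /eqP -> /orP [] /eqP ->; rewrite ?eqxx //.
by rewrite e_sym.
Qed.

Lemma line_edge_other (A : line_vert e) v : v \in val A -> exists a, e v a /\ val A = [set v; a].
Proof.
have [x [y [exy ->]]] := line_edge A.
rewrite !inE => /orP [] /eqP ->.
  by exists y.
by exists x; rewrite e_sym setUC.
Qed.

Lemma compl_line (A B : line_vert e) :
  compl_adj (line_adj e) A B = (val A :&: val B == set0).
Proof.
rewrite /compl_adj /line_adj.
case: (eqVneq A B) => [->|nAB] /=.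
  have [x [y [_ ->]]] := line_edge B.
  rewrite setIid; apply/esym/negbTE/set0Pn; exists x; by rewrite !inE eqxx.
by rewrite negbK.
Qed.

Lemma disj (A B : {set V}) x y : A :&: B == set0 -> x \in A -> y \in B -> x != y.
Proof.
move=> /eqP AB xA yB; apply/eqP => exy; subst y.
by have := in_setI x A B; rewrite AB in_set0 xA yB.
Qed.

End Gen.

Section LA.
Variables (V : finType) (e : rel V).
Hypotheses (e_sym : symmetric e) (e_irr : irreflexive e).

Lemma memA (x y : V) : x \in [set x; y]. Proof. by rewrite !inE eqxx. Qed.
Lemma memB (x y : V) : y \in [set x; y]. Proof. by rewrite !inE eqxx orbT. Qed.

Lemma lemmaA : is_acyclic e -> ~ twoP3 e -> cochordal (line_adj e).
Proof.
move=> acyc no2 [k [k4 [c [cinj crel]]]].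
have rel' : forall i j : 'I_k, (val (c i) :&: val (c j) == set0) =
   ((i.+1 %% k == j) || (j.+1 %% k == i)).
  by move=> i j; rewrite -compl_line crel.
have h0 : 0 < k by lia. have h1 : 1 < k by lia.
have h2 : 2 < k by lia. have h3 : 3 < k by lia.
pose o0 := Ordinal h0; pose o1 := Ordinal h1; pose o2 := Ordinal h2; pose o3 := Ordinal h3.
have cne : forall i j : 'I_k, i != j -> val (c i) != val (c j).
  move=> i j; apply: contraNneq => /val_inj /cinj ->; by [].
have modS : forall i, i < k -> i %% k = i by move=> i ik; rewrite modn_small.
have d01 : val (c o0) :&: val (c o1) == set0 by rewrite rel' /= modS.
have d12 : val (c o1) :&: val (c o2) == set0 by rewrite rel' /= modS.
have d23 : val (c o2) :&: val (c o3) == set0 by rewrite rel' /= modS.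
have i02 : val (c o0) :&: val (c o2) != set0.
  by rewrite rel' /= !modS //; lia.
have i13 : val (c o1) :&: val (c o3) != set0.
  rewrite rel' /= (modS 2) //; case: (eqVneq k 4) => [->|?] //; rewrite modS //; lia.
case: (eqVneq k 4) => [k4e | kn4].
- have d30 : val (c o3) :&: val (c o0) == set0.
    by rewrite rel' /= k4e.
  have [v] := set0Pn _ i02; rewrite inE => /andP [v0 v2].
  have [a [eva E0]] := line_edge_other e_sym v0.
  have [b [evb E2]] := line_edge_other e_sym v2.
  have ab : a != b.
    apply: contraTneq (cne o0 o2 isT) => eab; by rewrite E0 E2 eab eqxx.
  have [w] := set0Pn _ i13; rewrite inE => /andP [w1 w3].
  have [a' [ewa E1]] := line_edge_other e_sym w1.
  have [b' [ewb E3]] := line_edge_other e_sym w3.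
  have ab' : a' != b'.
    apply: contraTneq (cne o1 o3 isT) => eab; by rewrite E1 E3 eab eqxx.
  have d03 : val (c o0) :&: val (c o3) == set0 by rewrite setIC.
  have a0 : a \in val (c o0) by rewrite E0 memB.
  have b2 : b \in val (c o2) by rewrite E2 memB.
  have a1 : a' \in val (c o1) by rewrite E1 memB.
  have b3 : b' \in val (c o3) by rewrite E3 memB.
  have d32 : val (c o3) :&: val (c o2) == set0 by rewrite setIC.
  have d12' : val (c o2) :&: val (c o1) == set0 by rewrite setIC.
  apply: no2; apply: (@mk2P3 _ _ e_irr a v b a' w b'); rewrite ?(e_sym a) ?(e_sym a') //;
    by [apply: (disj d01) | apply: (disj d03) | apply: (disj d12') | apply: (disj d23)].
- have h4 : 4 < k by lia.
  pose o4 := Ordinal h4.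
  have d34 : val (c o3) :&: val (c o4) == set0 by rewrite rel' /= modS.
  have i03 : val (c o0) :&: val (c o3) != set0.
    by rewrite rel' /= !modS //; lia.
  have i14 : val (c o1) :&: val (c o4) != set0.
    rewrite rel' /= (modS 2) //; case: (eqVneq k 5) => [->|k5] //.
    by rewrite modS //; lia.
  have i24 : val (c o2) :&: val (c o4) != set0.
    rewrite rel' /= (modS 3) //; case: (eqVneq k 5) => [->|k5] //.
    by rewrite modS //; lia.
  have [p] := set0Pn _ i02; rewrite inE => /andP [p0 p2].
  have [q] := set0Pn _ i03; rewrite inE => /andP [q0 q3].
  have [r] := set0Pn _ i13; rewrite inE => /andP [r1 r3].
  have [s] := set0Pn _ i14; rewrite inE => /andP [s1 s4].
  have [t] := set0Pn _ i24; rewrite inE => /andP [t2 t4].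
  have d10 : val (c o1) :&: val (c o0) == set0 by rewrite setIC.
  have d21 : val (c o2) :&: val (c o1) == set0 by rewrite setIC.
  have pq : p != q by apply: (disj d23).
  have qr : q != r by apply: (disj d01).
  have qs : q != s by apply: (disj d01).
  have rs : r != s by apply: (disj d34).
  have st : s != t by apply: (disj d12).
  have pr : p != r by apply: (disj d21).
  have ps : p != s by apply: (disj d21).
  have tr : t != r by apply: (disj d21).
  have tq : t != q by apply: (disj d23).
  have epq := line_edge_adj e_sym p0 q0 pq.
  have eqr := line_edge_adj e_sym q3 r3 qr.
  have ers := line_edge_adj e_sym r1 s1 rs.
  have est := line_edge_adj e_sym s4 t4 st.
  case: (eqVneq t p) => [etp | ntp].
  + subst t.
    have := acyc [:: p; q; r; s]; rewrite /= !inE /= !negb_or pq pr ps qr qs rs /=.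
    by rewrite epq eqr ers est => /(_ isT isT).
  + have etp := line_edge_adj e_sym t2 p2 ntp.
    have := acyc [:: p; q; r; s; t]; rewrite /= !inE /= !negb_or pq pr ps qr qs rs /=.
    rewrite eq_sym ntp (eq_sym q) tq (eq_sym r) tr st /=.
    by rewrite epq eqr ers est etp => /(_ isT isT).
Qed.
End LA.

Lemma setI2_0 (V : finType) (x y u w : V) : x != u -> x != w -> y != u -> y != w ->
  [set x; y] :&: [set u; w] == set0.
Proof.
move=> xu xw yu yw; apply/eqP/setP => z; rewrite !inE.
case: (eqVneq z x) => [->|zx]; first by rewrite (negbTE xu) (negbTE xw).
case: (eqVneq z y) => [->|zy]; first by rewrite (negbTE yu) (negbTE yw).
by [].
Qed.

Definition cons4 (i j : 'I_4) := (i.+1 %% 4 == j) || (j.+1 %% 4 == i).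

Ltac neqs := repeat match goal with
  | H : is_true (~~ (?x == ?y)) |- context [?x == ?y] => rewrite (negbTE H)
  | H : is_true (~~ (?x == ?y)) |- context [?y == ?x] => rewrite (eq_sym y x) (negbTE H)
  end.

Section LAp.
Variables (V : finType) (e : rel V).
Hypotheses (e_sym : symmetric e) (e_irr : irreflexive e).

Definition mkL x y (h : e x y) : line_vert e :=
  exist _ [set x; y] (introT existsP (ex_intro _ x (introT existsP (ex_intro _ y
     (introT andP (conj h (eqxx _))))))).

Lemma lemmaAp : cochordal (line_adj e) -> ~ twoP3 e.
Proof.
move=> cc [a [b [c [d [f [g [U ab bc df fg]]]]]]].
apply: cc; exists 4; split=> //.
pose L0 := mkL ab; pose L1 := mkL df; pose L2 := mkL bc; pose L3 := mkL fg.
pose cc (i : 'I_4) := match val i with 0 => L0 | 1 => L1 | 2 => L2 | _ => L3 end.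
move: U; rewrite /= !inE !negb_or -!andbA => U.
have crel : forall i j, compl_adj (line_adj e) (cc i) (cc j) = cons4 i j.
{ repeat (move/andP: U => [? U]).
  move=> i j; rewrite compl_line /cons4.
  case: i j => [[|[|[|[|?]]]] ?] [[|[|[|[|?]]]] ?] //=.
  all: match goal with |- _ = ?r => let b := eval vm_compute in r in change r with b end.
  all: first [ by rewrite setI2_0 | by rewrite setIC setI2_0
             | (apply/negbTE/set0Pn; first [ by exists a; rewrite !inE !eqxx ?orbT
                                           | by exists b; rewrite !inE !eqxx ?orbT
                                           | by exists d; rewrite !inE !eqxx ?orbT
                                           | by exists f; rewrite !inE !eqxx ?orbT ]) ]. }
exists cc; split; last exact: crel.
repeat (move/andP: U => [? U]).
move=> i j /(congr1 val) E; apply/val_inj; move: E.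
case: i j => [[|[|[|[|?]]]] ?] [[|[|[|[|?]]]] ?] //= E.
all: first [ by move/setP/(_ a): E; rewrite !inE !eqxx /=; neqs
           | by move/setP/(_ c): E; rewrite !inE !eqxx /=; neqs
           | by move/setP/(_ d): E; rewrite !inE !eqxx /=; neqs
           | by move/setP/(_ g): E; rewrite !inE !eqxx /=; neqs ].
Qed.
End LAp.

Lemma transport (V W : finType) (e : rel V) (f : rel W) :
  isomorphic e f -> twoP3 e -> twoP3 f.
Proof.
move=> [g [gb gf]] [a [b [c [d [h [k [U ab bc dh hk]]]]]]].
exists (g a), (g b), (g c), (g d), (g h), (g k); split; rewrite ?gf //.
have gi := bij_inj gb.
by rewrite -(map_inj_uniq gi) in U.
Qed.

Lemma center_no2 (W : finType) (f : rel W) (v : W) :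
  (forall a b c, f a b -> f b c -> a != c -> v \in [:: a; b; c]) -> ~ twoP3 f.
Proof.
move=> H [a [b [c [d [h [k [U ab bc dh hk]]]]]]].
have /H v1 : a != c by move: (U); apply: contraTneq => ->; rewrite /= !inE !eqxx ?orbT ?andbF.
have /H v2 : d != k by move: (U); apply: contraTneq => ->; rewrite /= !inE !eqxx ?orbT ?andbF.
move: (v1 b ab bc) (v2 h dh hk) U.
rewrite /= !inE => /or3P [] /eqP -> /or3P [] /eqP ->; by rewrite !eqxx ?orbT ?andbF.
Qed.

Lemma card_no2 (W : finType) (f : rel W) : #|W| <= 5 -> ~ twoP3 f.
Proof.
move=> cW [a [b [c [d [h [k [U _ _ _ _]]]]]]].
have := uniq_leq_size U (fun x _ => mem_enum W x).
by rewrite -cardE /= ltnNge cW.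
Qed.

Lemma star_no2 n : ~ twoP3 (star_adj n).
Proof.
apply: (@center_no2 _ _ ord0) => a b c.
rewrite /star_adj !inE -!val_eqE /= => ab bc ac.
lia.
Qed.

Lemma wstar_no2 n (S : {set 'I_n.+1}) : ~ twoP3 (wstar_adj S).
Proof.
have p0 : wstar_pred S (inl ord0) by [].
apply: (@center_no2 _ _ (exist _ (inl ord0) p0)) => a b c.
rewrite !inE -!val_eqE /=.
case: a b c => [[x|x] px] [[y|y] py] [[z|z] pz]; rewrite /wstar_adj /= -?val_eqE /= /star_adj !eqE /=.
all: rewrite -?val_eqE /=; lia.
Qed.

Lemma path_no2 n : n <= 5 -> ~ twoP3 (path_adj n).
Proof. by move=> n5; apply: card_no2; rewrite card_ord. Qed.


Section Broom.
Variables n m : nat.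
Definition bpos (v : 'I_(n + m)) : nat := if v < n then v.+1 else 0.

Lemma bpos_adj u v : broom_adj n m u v -> bpos v <= bpos u + 1 /\ bpos u <= bpos v + 1.
Proof.
rewrite /broom_adj /bpos.
case: (ltnP u n) => hu; case: (ltnP v n) => hv /=; lia.
Qed.

Lemma bpos_walk j x y : walk (broom_adj n m) j x y -> bpos y <= bpos x + j /\ bpos x <= bpos y + j.
Proof.
elim: j x => [|j IH] x /=; first by move=> /eqP ->; lia.
case/existsP => z /andP [/bpos_adj xz /IH zy]; lia.
Qed.

Lemma broom_no2 : 0 < n -> diameter3 (broom_adj n m) -> ~ twoP3 (broom_adj n m).
Proof.
move=> n0 [D _].
have walk_bound : forall x y : 'I_(n + m), bpos x + 3 < bpos y -> False.
  move=> x y lt; case/existsP: (D x y) => j /bpos_walk; have := ltn_ord j; lia.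
case: (leqP n 3) => n3.
  have h0 : 0 < n + m by lia.
  apply: (@center_no2 _ _ (Ordinal h0)) => a b c.
  rewrite /broom_adj !inE -!val_eqE /= => ab bc ac.
  lia.
case: (leqP n 4) => n4.
  case: (posnP m) => [m0|mp].
    by apply: card_no2; rewrite card_ord; lia.
  have h4 : 4 < n + m by lia. have h3 : 3 < n + m by lia.
  exfalso; apply: (walk_bound (Ordinal h4) (Ordinal h3)).
  rewrite /bpos /=; have -> : (4 < n) = false by lia.
  have -> : (3 < n) = true by lia.
  by [].
have h4 : 4 < n + m by lia. have h0 : 0 < n + m by lia.
exfalso; apply: (walk_bound (Ordinal h0) (Ordinal h4)).
rewrite /bpos /=; have -> : (4 < n) = true by lia.
by rewrite n0.
Qed.
End Broom.



Section Cyc.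
Variables (V : finType) (e : rel V).
Hypotheses (e_sym : symmetric e) (e_irr : irreflexive e) (acyc : is_acyclic e).

Ltac symsat :=
  repeat match goal with
  | H : is_true (?e ?x ?y) |- _ =>
      lazymatch goal with
      | _ : is_true (e y x) |- _ => fail
      | _ => have ? : e y x by rewrite e_sym
      end
  | H : is_true (~~ (?x == ?y)) |- _ =>
      lazymatch goal with
      | _ : is_true (~~ (y == x)) |- _ => fail
      | _ => have ? : y != x by rewrite eq_sym
      end
  end.


Lemma tri a b c : e a b -> e b c -> e c a -> False.
Proof.
move=> ab bc ca; have := @acyc [:: a; b; c].
rewrite /= !inE !negb_or (neq_of_e e_irr ab) (neq_of_e e_irr bc).
rewrite eq_sym (neq_of_e e_irr ca) ab bc ca; by move/(_ isT isT).
Qed.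

Lemma c4 a b c d : e a b -> e b c -> e c d -> e d a -> a != c -> b != d -> False.
Proof.
move=> ab bc cd da ac bd; have := @acyc [:: a; b; c; d].
rewrite /= !inE !negb_or (neq_of_e e_irr ab) (neq_of_e e_irr bc) (neq_of_e e_irr cd).
rewrite (eq_sym a d) (neq_of_e e_irr da) ac bd ab bc cd da; by move/(_ isT isT).
Qed.

Lemma c5 a b c d f : e a b -> e b c -> e c d -> e d f -> e f a ->
  a != c -> a != d -> b != d -> b != f -> c != f -> False.
Proof.
move=> ab bc cd df fa ac ad bd bf cf; have := @acyc [:: a; b; c; d; f].
rewrite /= !inE !negb_or (neq_of_e e_irr ab) (neq_of_e e_irr bc) (neq_of_e e_irr cd).
rewrite (neq_of_e e_irr df) (eq_sym a f) (neq_of_e e_irr fa) ac ad bd bf cf ab bc cd df fa.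
by move/(_ isT isT).
Qed.

Lemma tri_ne p q a b : e a p -> e q b -> e b a -> p != q.
Proof. by move=> ap qb ba; apply/eqP => E; subst q; apply: (@tri a p b). Qed.

Lemma c4_ne p q a b c : e a p -> e q b -> e b c -> e c a -> a != b -> p != c -> p != q.
Proof. by move=> ap qb bc ca ab pc; apply/eqP => E; subst q; apply: (@c4 a p b c). Qed.

Lemma c5_ne p q a b c d : e a p -> e q b -> e b c -> e c d -> e d a ->
  a != b -> a != c -> p != c -> p != d -> b != d -> p != q.
Proof. by move=> ap qb bc cd da ab ac pc pd bd; apply/eqP => E; subst q; apply: (@c5 a p b c d). Qed.

Lemma irr_ne p q : e p q -> p != q. Proof. exact: neq_of_e. Qed.

Ltac ne1 := match goal with
  | H : is_true (?p != ?q) |- is_true (?p != ?q) => exact H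
  | H : is_true (e ?p ?q) |- is_true (?p != ?q) => exact (irr_ne H)
  | H1 : is_true (e ?a ?p), H2 : is_true (e ?q ?b), H3 : is_true (e ?b ?a) |- is_true (?p != ?q) =>
      exact (tri_ne H1 H2 H3)
  end.
Ltac ne2 := first [ ne1 | match goal with
  | H1 : is_true (e ?a ?p), H2 : is_true (e ?q ?b), H3 : is_true (e ?b ?c), H4 : is_true (e ?c ?a)
    |- is_true (?p != ?q) => apply: (c4_ne H1 H2 H3 H4); ne1
  end ].
Ltac ne3 := first [ ne2 | match goal with
  | H1 : is_true (e ?a ?p), H2 : is_true (e ?q ?b), H3 : is_true (e ?b ?c), H4 : is_true (e ?c ?d),
    H5 : is_true (e ?d ?a)
    |- is_true (?p != ?q) => apply: (c5_ne H1 H2 H3 H4 H5); ne2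
  end ].
Ltac nes := symsat; try by []; ne3.

Definition bad1 c x := [exists y1, exists y2, [&& e x y1, e x y2, y1 != c, y2 != c & y1 != y2]].
Definition bad2 c x := [exists y, exists w, [&& e x y, y != c, e y w & w != x]].
Definition centralb c := [forall x, e c x ==> ~~ (bad1 c x || bad2 c x)].

Hypothesis no2 : ~ twoP3 e.
Hypothesis V0 : 0 < #|V|.

Ltac ne := apply/eqP => ?; subst.

Lemma exists_central : exists c, centralb c.
Proof.
case: (pickP (fun m => [exists a, exists z, [&& e m a, e m z & a != z]])) => [m | none]; last first.
  case/card_gt0P: V0 => c _; exists c; apply/forallP => x; apply/implyP => cx.
  rewrite negb_or; apply/andP; split.
    apply/negP => /existsP [y1 /existsP [y2 /and5P [x1 x2 _ _ n12]]].
    by have := none x; rewrite /=; move/negbT/negP; apply; apply/existsP; exists y1;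
      apply/existsP; exists y2; rewrite x1 x2 n12.
  apply/negP => /existsP [y /existsP [w /and4P [xy _ yw wx]]].
  have := none y; rewrite /=; move/negbT/negP; apply; apply/existsP; exists w;
    apply/existsP; exists x; by rewrite yw e_sym xy wx.
move=> /existsP [a /existsP [z /and3P [ma mz az]]].
case: (boolP (centralb m)) => [cm | ]; first by exists m.
rewrite negb_forall => /existsP [x]; rewrite negb_imply negbK => /andP [mx bx].
have U1 : forall u u', e m u -> e m u' -> u != x -> u' != x -> u = u'.
  move=> u u' mu mu' ux u'x; apply/eqP/negPn/negP => uu'.
  case/orP: bx => [/existsP [y1 /existsP [y2 /and5P [x1 x2 n1 n2 n12]]] |
                   /existsP [y /existsP [w /and4P [xy ym yw wx]]]].
  { apply: no2; apply: (@mk2P3 _ _ e_irr u m u' y1 x y2); rewrite ?(e_sym u) //.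
    all: symsat; try by [].
    all: nes. }
  { apply: no2; apply: (@mk2P3 _ _ e_irr u m u' x y w); rewrite ?(e_sym u) //.
    all: symsat; try by [].
    all: nes. }
have U2 : forall u t, e m u -> u != x -> e u t -> t = m.
  move=> u t mu ux ut; apply/eqP/negPn/negP => tm.
  case/orP: bx => [/existsP [y1 /existsP [y2 /and5P [x1 x2 n1 n2 n12]]] |
                   /existsP [y /existsP [w /and4P [xy ym yw wx]]]].
  { apply: no2; apply: (@mk2P3 _ _ e_irr m u t y1 x y2); rewrite ?(e_sym u) //.
    all: symsat; try by [].
    all: nes. }
  { apply: no2; apply: (@mk2P3 _ _ e_irr m u t x y w); rewrite ?(e_sym u) //.
    all: symsat; try by [].
    all: nes. }
have [u0 [mu0 u0x]] : exists u0, e m u0 /\ u0 != x.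
  case: (eqVneq a x) => [ax|ax]; last by exists a.
  by exists z; split=> //; rewrite -ax eq_sym.
exists x; apply/forallP => y; apply/implyP => xy.
case: (eqVneq y m) => [->|ym].
  rewrite negb_or; apply/andP; split.
    apply/negP => /existsP [y1 /existsP [y2 /and5P [x1 x2 n1 n2 n12]]].
    by move: n12; rewrite (U1 y1 y2) ?eqxx.
  apply/negP => /existsP [y' /existsP [w /and4P [xy' ym' yw wx]]].
  by move: wx; rewrite (U2 y' w) ?eqxx.
rewrite negb_or; apply/andP; split.
{ apply/negP => /existsP [t1 /existsP [t2 /and5P [x1 x2 n1 n2 n12]]].
  apply: no2; apply: (@mk2P3 _ _ e_irr t1 y t2 u0 m x); rewrite ?(e_sym t1) ?(e_sym u0) //.
  all: symsat; try by [].
  all: nes. }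
apply/negP => /existsP [t /existsP [s /and4P [yt tx ts sy]]].
apply: no2; apply: (@mk2P3 _ _ e_irr y t s u0 m x); rewrite ?(e_sym u0) //.
all: symsat; try by [].
all: nes.
Qed.

End Cyc.

Section Iso.
Variables (V : finType) (e : rel V).
Hypotheses (e_sym : symmetric e) (e_irr : irreflexive e) (acyc : is_acyclic e)
  (conn : is_connected e).
Variable c : V.
Hypothesis cc : centralb e c.

Lemma F1 p y1 y2 : e c p -> e p y1 -> e p y2 -> y1 != c -> y2 != c -> y1 = y2.
Proof.
move=> cp p1 p2 n1 n2; apply/eqP/negPn/negP => n12.
move/forallP/(_ p)/implyP/(_ cp): cc; rewrite negb_or => /andP [/negP H _]; apply: H.
by apply/existsP; exists y1; apply/existsP; exists y2; rewrite p1 p2 n1 n2 n12.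
Qed.

Lemma F2 p y w : e c p -> e p y -> y != c -> e y w -> w = p.
Proof.
move=> cp py yc yw; apply/eqP/negPn/negP => wp.
move/forallP/(_ p)/implyP/(_ cp): cc; rewrite negb_or => /andP [_ /negP H]; apply: H.
by apply/existsP; exists y; apply/existsP; exists w; rewrite py yc yw wp.
Qed.

Lemma closure v : [|| v == c, e c v | [exists p, e c p && e p v]].
Proof.
pose A := [pred v | [|| v == c, e c v | [exists p, e c p && e p v]]].
have one : forall x y, e x y -> x \in A -> y \in A.
  move=> x y xy; rewrite !inE => /or3P [/eqP xc| cx | /existsP [p /andP [cp px]]].
  - by subst x; rewrite xy orbT.
  - case: (eqVneq y c) => [->|yc]; first by [].
    by apply/or3P; apply: Or33; apply/existsP; exists x; rewrite cx xy.
  - case: (eqVneq x c) => [xc|xc]; first by subst x; rewrite xy orbT.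
    by rewrite (F2 cp px xc xy) cp orbT.
have clA : closed e A.
  move=> x y xy; apply/idP/idP; first exact: one.
  by apply: one; rewrite e_sym.
have := closed_connect clA (conn c v).
by rewrite !inE eqxx /= => <-.
Qed.

Definition N := [seq v <- enum V | e c v].
Lemma N_uniq : uniq N. Proof. by rewrite filter_uniq ?enum_uniq. Qed.
Lemma mem_N v : (v \in N) = e c v. Proof. by rewrite mem_filter mem_enum andbT. Qed.

Definition n := size N.
Definition hasw p := [exists y, e p y && (y != c)].
Definition wh p := odflt c [pick y | e p y && (y != c)].
Definition nb (i : 'I_n.+1) := nth c N i.-1.
Definition S := [set i : 'I_n.+1 | (0 < i) && hasw (nb i)].

Definition h (x : wstar_vert S) : V :=
  match val x with
  | inl i => if i == 0 :> nat then c else nb i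
  | inr i => wh (nb i)
  end.

Lemma nb_adj (i : 'I_n.+1) : 0 < i -> e c (nb i).
Proof.
move=> i0; rewrite -mem_N /nb; apply: mem_nth.
by case: i i0 => [[|k] hk] //= _; rewrite /n in hk; lia.
Qed.

Lemma nb_inj (i j : 'I_n.+1) : 0 < i -> 0 < j -> nb i = nb j -> i = j.
Proof.
case: i => [[|i] hi] //= _; case: j => [[|j] hj] //= _.
have hi' : i < size N by rewrite /n in hi; lia.
have hj' : j < size N by rewrite /n in hj; lia.
rewrite /nb /= => /eqP; rewrite nth_uniq ?N_uniq //.
by move=> /eqP ij; apply/val_inj => /=; rewrite ij.
Qed.

Lemma wh_spec p : hasw p -> e p (wh p) && (wh p != c).
Proof.
rewrite /hasw /wh; case: pickP => [y /= -> //| none] /existsP [y yp].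
by have := none y; rewrite yp.
Qed.

Lemma S_spec (i : 'I_n.+1) : i \in S -> 0 < i /\ e (nb i) (wh (nb i)) /\ wh (nb i) != c.
Proof.
rewrite inE => /andP [i0 /wh_spec /andP [a b]]; by [].
Qed.

Lemma wh_unique p y : e c p -> e p y -> y != c -> wh p = y.
Proof.
move=> cp py yc.
have hw : hasw p by apply/existsP; exists y; rewrite py yc.
case/andP: (wh_spec hw) => a b.
exact: (F1 cp a py b yc).
Qed.

Lemma trF a b d : e a b -> e b d -> e d a -> False.
Proof. move=> ab bd da; exact: (tri e_irr acyc ab bd da). Qed.

Definition mkl (i : 'I_n.+1) : wstar_vert S := exist _ (inl i) isT.

Lemma h_adj x y : e (h x) (h y) = wstar_adj S x y.
Proof.
case: x y => [[i|i] pi] [[j|j] pj]; rewrite /h /wstar_adj /=.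
- rewrite /star_adj.
  case: (eqVneq (i : nat) 0) => [i0|i0]; case: (eqVneq (j : nat) 0) => [j0|j0] /=.
  + by rewrite e_irr.
  + by rewrite nb_adj // lt0n.
  + by rewrite e_sym nb_adj // lt0n.
  + apply/negbTE/negP => ij.
    by apply: (@trF c (nb i) (nb j)); rewrite ?nb_adj ?lt0n // e_sym nb_adj ?lt0n.
- have [j0 [ew wc]] := S_spec pj.
  case: (eqVneq (i : nat) 0) => [i0|i0] /=.
  + have -> : (i == j) = false by apply/negbTE; rewrite -val_eqE /= i0; lia.
    apply/negbTE/negP => cw.
    by apply: (@trF c (nb j) (wh (nb j))); rewrite ?nb_adj // e_sym.
  + case: (eqVneq i j) => [->|ij]; first by [].
    apply/negP => iw.
    apply: (c4 e_irr acyc (nb_adj _) iw _ (_ : e (nb j) c)).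
    * by rewrite lt0n.
    * by rewrite e_sym.
    * by rewrite e_sym nb_adj.
    * by rewrite eq_sym.
    * apply/negP => /eqP /nb_inj; rewrite lt0n => /(_ i0 j0) E; by rewrite E eqxx in ij.
- have [i0 [ew wc]] := S_spec pi.
  case: (eqVneq (j : nat) 0) => [j0|j0] /=.
  + have -> : (i == j) = false by apply/negbTE; rewrite -val_eqE /= j0; lia.
    apply/negbTE/negP => cw.
    by apply: (@trF c (nb i) (wh (nb i))); rewrite ?nb_adj.
  + case: (eqVneq i j) => [E|ij]; first by subst i; rewrite e_sym ew.
    apply/negP => iw.
    have ci : e c (nb i) by rewrite nb_adj.
    have jc : e (nb j) c by rewrite e_sym nb_adj // lt0n.
    have nij : nb i != nb j.
      apply/negP => /eqP /nb_inj; move=> /(_ i0) E; have := E; rewrite lt0n => /(_ j0) {}E; by rewrite E eqxx in ij.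
    apply: (c4 e_irr acyc ci ew iw jc) => //; by rewrite eq_sym.
- have [i0 [ewi wci]] := S_spec pi.
  have [j0 [ewj wcj]] := S_spec pj.
  apply/negP => ww.
  have E := F2 (nb_adj i0) ewi wci ww.
  apply: (@trF c (nb j) (wh (nb j))); rewrite ?nb_adj // E e_sym nb_adj //.
Qed.

Lemma h_inj : injective h.
Proof.
case=> [[i|i] pi] [[j|j] pj]; rewrite /h /=.
- case: (eqVneq (i : nat) 0) => [i0|i0]; case: (eqVneq (j : nat) 0) => [j0|j0] /=.
  + by move=> _; apply/val_inj; congr inl; apply/val_inj; rewrite /= i0 j0.
  + by move=> E; have := nb_adj (_ : 0 < j); rewrite -E e_irr lt0n => /(_ j0).
  + by move=> E; have := nb_adj (_ : 0 < i); rewrite E e_irr lt0n => /(_ i0).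
  + rewrite -!lt0n in i0 j0.
    by move=> /(nb_inj i0 j0) E; apply/val_inj; rewrite /= E.
- have [j0 [ew wc]] := S_spec pj.
  case: (eqVneq (i : nat) 0) => [i0|i0] /= E.
  + by rewrite E eqxx in wc.
  + exfalso; rewrite -lt0n in i0.
    by apply: (@trF c (nb j) (wh (nb j))); rewrite ?nb_adj // -E e_sym nb_adj.
- have [i0 [ew wc]] := S_spec pi.
  case: (eqVneq (j : nat) 0) => [j0|j0] /= E.
  + by rewrite E eqxx in wc.
  + exfalso; rewrite -lt0n in j0.
    by apply: (@trF c (nb i) (wh (nb i))); rewrite ?nb_adj // E e_sym nb_adj.
- have [i0 [ewi wci]] := S_spec pi.
  have [j0 [ewj wcj]] := S_spec pj => E.
  have := F2 (nb_adj i0) ewi wci (_ : e (wh (nb i)) (nb j)).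
  rewrite E e_sym => /(_ ewj) /esym /(nb_inj i0 j0) ij.
  by apply/val_inj; rewrite /= ij.
Qed.

Lemma h_surj v : exists x, h x = v.
Proof.
have hn : forall p, e c p -> (index p N).+1 < n.+1.
  by move=> p cp; rewrite ltnS /n index_mem mem_N.
have nbi : forall p (cp : e c p), nb (Ordinal (hn p cp)) = p.
  by move=> p cp; rewrite /nb /= nth_index // mem_N.
case/or3P: (closure v) => [/eqP -> | cv | /existsP [p /andP [cp pv]]].
- by exists (mkl ord0).
- by exists (mkl (Ordinal (hn v cv))); rewrite /h /= nbi.
- case: (eqVneq v c) => [->|vc]; first by exists (mkl ord0).
  have iS : Ordinal (hn p cp) \in S.
    rewrite inE /= nbi; apply/existsP; exists v; by rewrite pv vc.
  exists (exist _ (inr (Ordinal (hn p cp))) iS); rewrite /h /= nbi.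
  exact: wh_unique.
Qed.

Lemma iso_wstar : isomorphic e (wstar_adj S).
Proof.
pose g v := odflt (mkl ord0) [pick x | h x == v].
have gK : cancel g h.
  move=> v; rewrite /g; case: pickP => [x /eqP //|none].
  by have [x hx] := h_surj v; have := none x; rewrite hx eqxx.
have hK : cancel h g by move=> x; apply: h_inj; rewrite gK.
exists g; split; first exact: (Bijective gK hK).
by move=> x y; rewrite -h_adj !gK.
Qed.
End Iso.


Theorem corollary2p11 (V : finType) (e : rel V)
  (e_sym : symmetric e) (e_irr : irreflexive e) (T_tree : is_tree e) :
  cochordal (line_adj e) <->
  [\/ exists n : nat, isomorphic e (star_adj n),
      exists n m : nat, 0 < n /\ diameter3 (broom_adj n m) /\ isomorphic e (broom_adj n m),
      exists (n : nat) (S : {set 'I_n.+1}), isomorphic e (wstar_adj S)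
    | exists n : nat, 2 <= n <= 5 /\ isomorphic e (path_adj n)].
Proof.
case: T_tree => V0 [conn acyc]; split.
  move=> cc; have no2 := lemmaAp cc.
  have [c cc'] := exists_central e_sym e_irr acyc no2 V0.
  by apply: Or43; eexists; eexists; exact: (iso_wstar e_sym e_irr acyc conn cc').
case=> [[n iso] | [n [m [n0 [d3 iso]]]] | [n [S iso]] | [n [/andP [_ n5] iso]]];
  apply: (lemmaA e_sym e_irr acyc) => /(transport iso).
- exact: star_no2.
- exact: broom_no2.
- exact: wstar_no2.
- exact: path_no2.
Qed.
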